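(* Let $k\ge1$ and let $m$ be an integer such that $a_{k+1}q_k<m<q_{k+1}$. If $m\ne q_{k+1,a_{k+1}-1}$, and moreover $m\neq (a_{k+1}-1)q_k+2q_{k-1}$ in case $a_k=1$, then $\|m\alpha\|\ge\|q_{k-1}\alpha\|+(a_{k+1}+1)\|q_k\alpha\|$.
   Context: $\alpha\in(0,1)$ irrational, $\alpha=[0;a_1,a_2,\ldots]$ with positive integers $a_i$, $a_1\ge2$; $q_{-1}=0$, $q_0=1$, $q_1=a_1$, $q_k=a_kq_{k-1}+q_{k-2}$ ($k\ge2$). For $j\ge2$ and $1\le\ell<a_j$, $q_{j,\ell}=\ell q_{j-1}+q_{j-2}$ (denominators of semiconvergents). $\|x\|$ is the distance from $x$ to the nearest integer. *)

(* Defs.v *)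
From Stdlib Require Import Reals ZArith Lra Lia.
Open Scope R_scope.

Definition floorR (x : R) : Z := Int_part x.

Definition dist_int (x : R) : R :=
  Rmin (x - IZR (floorR x)) (IZR (floorR x) + 1 - x).

Definition irrational (x : R) : Prop :=
  ~ exists (p q : Z), q <> 0%Z /\ x = IZR p / IZR q.

(* Continued fraction expansion alpha = [0; a_1, a_2, ...] via the Gauss map:
   cf_rem alpha 0 = alpha, cf_rem alpha (n+1) = 1/cf_rem alpha n - floor(1/cf_rem alpha n),
   a_(n+1) = floor (1 / cf_rem alpha n). *)
Fixpoint cf_rem (alpha : R) (n : nat) : R :=
  match n with
  | O => alpha
  | S n' => / cf_rem alpha n' - IZR (floorR (/ cf_rem alpha n'))
  end.

(* partial quotients a_n (n >= 1); cf_a alpha 0 = 0 is the integer part of alpha in (0,1) *)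
Definition cf_a (alpha : R) (n : nat) : Z :=
  match n with
  | O => 0%Z
  | S n' => floorR (/ cf_rem alpha n')
  end.

Fixpoint cf_q_pair (alpha : R) (n : nat) : Z * Z :=
  (* returns (q_n, q_(n-1)) with q_(-1) = 0 *)
  match n with
  | O => (1%Z, 0%Z)
  | S n' => let '(x, y) := cf_q_pair alpha n' in
            ((cf_a alpha (S n') * x + y)%Z, x)
  end.

Definition cf_q (alpha : R) (n : nat) : Z := fst (cf_q_pair alpha n).

(* semiconvergent denominators q_(j,l) = l q_(j-1) + q_(j-2), for j >= 2 *)
Definition cf_qsemi (alpha : R) (j : nat) (l : Z) : Z :=
  (l * cf_q alpha (j - 1) + cf_q alpha (j - 2))%Z.

(* Main.v *)
Require Import Defs.
From Stdlib Require Import Reals ZArith.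
From Stdlib Require Import Lra Lia Psatz.
Open Scope R_scope.

Fixpoint cf_p_pair (alpha : R) (n : nat) : Z * Z :=
  match n with
  | O => (0%Z, 1%Z)
  | S n' => let '(x, y) := cf_p_pair alpha n' in
            ((cf_a alpha (S n') * x + y)%Z, x)
  end.

Lemma q_succ alpha j : cf_q_pair alpha (S j) =
  ((cf_a alpha (S j) * fst (cf_q_pair alpha j) + snd (cf_q_pair alpha j))%Z,
   fst (cf_q_pair alpha j)).
Proof. simpl. destruct (cf_q_pair alpha j); reflexivity. Qed.

Lemma p_succ alpha j : cf_p_pair alpha (S j) =
  ((cf_a alpha (S j) * fst (cf_p_pair alpha j) + snd (cf_p_pair alpha j))%Z,
   fst (cf_p_pair alpha j)).
Proof. simpl. destruct (cf_p_pair alpha j); reflexivity. Qed.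

Lemma rem_succ alpha n : cf_rem alpha (S n) =
  / cf_rem alpha n - IZR (cf_a alpha (S n)).
Proof. reflexivity. Qed.

Lemma rem_props alpha : 0 < alpha < 1 -> irrational alpha ->
  forall n, irrational (cf_rem alpha n) /\ 0 < cf_rem alpha n < 1.
Proof.
  intros Ha Hi n; induction n as [|n IH]; [simpl; tauto|].
  destruct IH as [Ir [H0 H1]].
  rewrite rem_succ. unfold cf_a, floorR.
  set (r := cf_rem alpha n) in *.
  destruct (base_Int_part (/ r)) as [B1 B2].
  set (z := Int_part (/ r)) in *.
  assert (Hirr : irrational (/ r - IZR z)).
  { intros [p [q [Hq Heq]]]. apply Ir.
    assert (Hr : / r > 0) by (apply Rinv_0_lt_compat; lra).
    assert (Hpz : (p + z * q)%Z <> 0%Z).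
    { intro E. assert (E' : IZR p + IZR z * IZR q = 0)
        by (rewrite <- mult_IZR, <- plus_IZR, E; reflexivity).
      assert (Hq' : IZR q <> 0) by (apply not_0_IZR; exact Hq).
      assert (H3 : / r = IZR p / IZR q + IZR z) by lra.
      assert (H4 : / r = (IZR p + IZR z * IZR q) / IZR q) by (rewrite H3; field; auto).
      rewrite E' in H4. unfold Rdiv in H4. rewrite Rmult_0_l in H4. lra. }
    exists q, (p + z * q)%Z. split; [exact Hpz|].
    assert (Hq' : IZR q <> 0) by (apply not_0_IZR; exact Hq).
    assert (Hpz' : IZR (p + z * q) <> 0) by (apply not_0_IZR; exact Hpz).
    assert (E : / r = IZR (p + z*q) / IZR q).
    { rewrite plus_IZR, mult_IZR. assert (/ r = IZR p / IZR q + IZR z) by lra.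
      rewrite H. field; auto. }
    replace r with (/ / r) by (field; lra). rewrite E. field.
    all: try split; auto. }
  split; [exact Hirr|]. split; [|lra].
  destruct (Req_dec (/ r - IZR z) 0) as [E|E]; [|lra].
  exfalso. apply Hirr. exists 0%Z, 1%Z. split; [lia|]. rewrite E. simpl. field.
Qed.

Lemma a_ge1 alpha : 0 < alpha < 1 -> irrational alpha ->
  forall n, (1 <= cf_a alpha (S n))%Z.
Proof.
  intros Ha Hi n. destruct (rem_props alpha Ha Hi n) as [_ [H0 H1]].
  unfold cf_a, floorR. destruct (base_Int_part (/ cf_rem alpha n)) as [B1 B2].
  assert (/ cf_rem alpha n > 1).
  { rewrite <- Rinv_1. apply Rinv_lt_contravar; lra. }
  assert (0 < Int_part (/ cf_rem alpha n))%Z by (apply lt_IZR; simpl; lra). lia.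
Qed.

Lemma theta alpha : 0 < alpha < 1 -> irrational alpha -> forall n,
  IZR (fst (cf_q_pair alpha n)) * alpha - IZR (fst (cf_p_pair alpha n)) =
  - cf_rem alpha n * (IZR (snd (cf_q_pair alpha n)) * alpha - IZR (snd (cf_p_pair alpha n))).
Proof.
  intros Ha Hi n; induction n as [|n IH]; [simpl; ring|].
  rewrite q_succ, p_succ, rem_succ. cbn [fst snd].
  destruct (rem_props alpha Ha Hi n) as [_ [H0 H1]].
  set (r := cf_rem alpha n) in *.
  set (x := fst (cf_q_pair alpha n)) in *. set (y := snd (cf_q_pair alpha n)) in *.
  set (u := fst (cf_p_pair alpha n)) in *. set (v := snd (cf_p_pair alpha n)) in *.
  set (a := cf_a alpha (S n)).
  assert (H : IZR y*alpha - IZR v = - (IZR x*alpha - IZR u) / r) by (rewrite IH; field; lra).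
  rewrite !plus_IZR, !mult_IZR.
  replace ((IZR a * IZR x + IZR y) * alpha - (IZR a * IZR u + IZR v))
    with (IZR a * (IZR x * alpha - IZR u) + (IZR y*alpha - IZR v)) by ring.
  rewrite H. field. lra.
Qed.

Lemma det alpha : forall n,
  (fst (cf_q_pair alpha n) * snd (cf_p_pair alpha n) - fst (cf_p_pair alpha n) * snd (cf_q_pair alpha n) = 1
   \/ fst (cf_q_pair alpha n) * snd (cf_p_pair alpha n) - fst (cf_p_pair alpha n) * snd (cf_q_pair alpha n) = -1)%Z.
Proof.
  induction n as [|n IH]; [simpl; lia|].
  rewrite q_succ, p_succ. cbn [fst snd].
  destruct IH as [H|H]; [right|left]; nia.
Qed.

Lemma qpos alpha : 0 < alpha < 1 -> irrational alpha -> forall n,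
  (1 <= fst (cf_q_pair alpha n) /\ 0 <= snd (cf_q_pair alpha n)
   /\ snd (cf_q_pair alpha n) <= fst (cf_q_pair alpha n))%Z.
Proof.
  intros Ha Hi n; induction n as [|n IH]; [simpl; lia|].
  rewrite q_succ. cbn [fst snd]. pose proof (a_ge1 alpha Ha Hi n). nia.
Qed.

Lemma dist_le z p : dist_int z <= Rabs (z - IZR p).
Proof.
  unfold dist_int, floorR. destruct (base_Int_part z) as [B1 B2].
  destruct (Z_le_gt_dec p (Int_part z)) as [H|H].
  - apply IZR_le in H. eapply Rle_trans; [apply Rmin_l|].
    eapply Rle_trans; [|apply RRle_abs]. lra.
  - assert (H' : (Int_part z + 1 <= p)%Z) by lia. apply IZR_le in H'.
    rewrite plus_IZR in H'. simpl in H'.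
    eapply Rle_trans; [apply Rmin_r|]. rewrite <- Rabs_Ropp.
    eapply Rle_trans; [|apply RRle_abs]. lra.
Qed.

Lemma dist_ge z T : (forall p, T <= Rabs (z - IZR p)) -> T <= dist_int z.
Proof.
  intros H. unfold dist_int, floorR. destruct (base_Int_part z) as [B1 B2].
  apply Rmin_glb.
  - specialize (H (Int_part z)). rewrite Rabs_right in H; lra.
  - specialize (H (Int_part z + 1)%Z). rewrite plus_IZR in H. simpl in H.
    rewrite Rabs_left1 in H; lra.
Qed.

Lemma key (x y a Q Q' : Z) (c : R) :
  IZR a <= c -> 1 <= c -> (1 <= a)%Z -> (1 <= Q')%Z -> (Q' <= Q)%Z ->
  (a * Q < x * Q + y * Q' < a * Q + Q')%Z -> ~ (y = 2 /\ x = a - 1)%Z ->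
  c + IZR a + 1 <= Rabs (IZR x - c * IZR y).
Proof.
  intros Hc Hc1 Ha HQ' HQ Hm Hex.
  assert (C : ((a + 1 <= x /\ y <= -1) \/ (x <= -1 /\ a + 2 <= y)
             \/ (3 <= y /\ 0 <= x <= a - 1))%Z).
  { destruct (Z_lt_le_dec y 0) as [Hy|Hy].
    - left. split; [|lia]. destruct (Z_le_gt_dec x a); [|lia]. nia.
    - destruct (Z.eq_dec y 0) as [Hy0|Hy0].
      + exfalso. subst y. destruct (Z_le_gt_dec x a); nia.
      + destruct (Z_lt_le_dec x 0) as [Hx|Hx].
        * right; left. split; [lia|]. destruct (Z_le_gt_dec (a+2) y); [lia|]. nia.
        * right; right. assert (x <= a - 1)%Z by (destruct (Z_le_gt_dec x (a-1)); [lia|nia]).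
          split; [|lia].
          destruct (Z.eq_dec y 1); [subst; nia|].
          destruct (Z.eq_dec y 2); [|lia]. subst y.
          exfalso. apply Hex. split; [reflexivity|].
          destruct (Z.eq_dec x (a-1)); [assumption|]. nia. }
  assert (Ra : 1 <= IZR a) by (apply IZR_le; lia).
  destruct C as [[H1 H2]|[[H1 H2]|[H1 [H2 H3]]]].
  - apply IZR_le in H1, H2. rewrite plus_IZR in H1.
    assert (c * IZR y <= c * (-1)) by (apply Rmult_le_compat_l; lra).
    eapply Rle_trans; [|apply RRle_abs]. lra.
  - apply IZR_le in H1, H2. rewrite plus_IZR in H2.
    assert (c * (IZR a + 2) <= c * IZR y) by (apply Rmult_le_compat_l; lra).
    assert (c * IZR a >= IZR a) by (rewrite <- (Rmult_1_l (IZR a)) at 2; apply Rle_ge, Rmult_le_compat_r; lra).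
    rewrite <- Rabs_Ropp. eapply Rle_trans; [|apply RRle_abs]. lra.
  - apply IZR_le in H1, H2, H3. rewrite minus_IZR in H3.
    assert (c * 3 <= c * IZR y) by (apply Rmult_le_compat_l; lra).
    rewrite <- Rabs_Ropp. eapply Rle_trans; [|apply RRle_abs]. lra.
Qed.

Theorem lemma3p3 (alpha : R) (k : nat) (m : Z) :
  0 < alpha < 1 ->
  irrational alpha ->
  (2 <= cf_a alpha 1)%Z ->
  (1 <= k)%nat ->
  (cf_a alpha (S k) * cf_q alpha k < m < cf_q alpha (S k))%Z ->
  m <> cf_qsemi alpha (S k) (cf_a alpha (S k) - 1) ->
  (cf_a alpha k = 1%Z ->
     m <> ((cf_a alpha (S k) - 1) * cf_q alpha k + 2 * cf_q alpha (k - 1))%Z) ->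
  dist_int (IZR m * alpha) >=
    dist_int (IZR (cf_q alpha (k - 1)) * alpha)
    + IZR (cf_a alpha (S k) + 1) * dist_int (IZR (cf_q alpha k) * alpha).
Proof.
  intros Ha Hi _ Hk Hm _ Hex.
  destruct k as [|n]; [lia|].
  replace (S n - 1)%nat with n in * by lia.
  unfold cf_q in *.
  rewrite (q_succ alpha (S n)) in Hm. cbn [fst snd] in Hm.
  pose proof (q_succ alpha n) as En.
  assert (EQ' : fst (cf_q_pair alpha n) = snd (cf_q_pair alpha (S n))) by (rewrite En; reflexivity).
  rewrite EQ' in Hex |- *.
  set (Q := fst (cf_q_pair alpha (S n))) in *.
  set (Q' := snd (cf_q_pair alpha (S n))) in *.
  set (P := fst (cf_p_pair alpha (S n))).
  set (P' := snd (cf_p_pair alpha (S n))).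
  set (a := cf_a alpha (S (S n))) in *.
  pose proof (theta alpha Ha Hi (S n)) as Th. fold Q Q' P P' in Th.
  destruct (rem_props alpha Ha Hi (S n)) as [_ [R0 R1]].
  set (r := cf_rem alpha (S n)) in *.
  set (c := / r).
  assert (Hc1 : 1 <= c). { unfold c. rewrite <- Rinv_1. left. apply Rinv_lt_contravar; lra. }
  assert (Hca : IZR a <= c).
  { unfold a, c, cf_a, floorR, r. apply (base_Int_part (/ cf_rem alpha (S n))). }
  pose proof (a_ge1 alpha Ha Hi (S n)) as Ha1. fold a in Ha1.
  pose proof (qpos alpha Ha Hi (S n)) as [HQ1 [HQ2 HQ3]]. fold Q Q' in HQ1, HQ2, HQ3.
  assert (HQ'1 : (1 <= Q')%Z).
  { rewrite <- EQ'. apply (qpos alpha Ha Hi n). }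
  set (t := IZR Q * alpha - IZR P) in *.
  set (t' := IZR Q' * alpha - IZR P') in *.
  assert (Ht' : t' = - c * t) by (unfold c; rewrite Th; field; lra).
  assert (Hex2 : m <> ((a - 1) * Q + 2 * Q')%Z).
  { pose proof (a_ge1 alpha Ha Hi n) as Hak.
    destruct (Z.eq_dec (cf_a alpha (S n)) 1) as [E|E]; [exact (Hex E)|].
    intro Em.
    assert (HQQ : (2 * Q' <= Q)%Z).
    { unfold Q, Q'. rewrite En. cbn [fst snd].
      pose proof (qpos alpha Ha Hi n). nia. }
    lia. }
  assert (Hlow : Rabs t' + IZR (a + 1) * Rabs t <= dist_int (IZR m * alpha)).
  { apply dist_ge. intro p.
    destruct (det alpha (S n)) as [D|D]; fold Q Q' P P' in D.
    - set (x := (m * P' - p * Q')%Z). set (y := (Q * p - P * m)%Z).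
      assert (E1 : m = (x * Q + y * Q')%Z).
      { replace (x * Q + y * Q')%Z with (m * (Q * P' - P * Q'))%Z by (unfold x, y; ring). rewrite D; ring. }
      assert (E2 : p = (x * P + y * P')%Z).
      { replace (x * P + y * P')%Z with (p * (Q * P' - P * Q'))%Z by (unfold x, y; ring). rewrite D; ring. }
      assert (EE : IZR m * alpha - IZR p = (IZR x - c * IZR y) * t).
      { rewrite E1, E2, !plus_IZR, !mult_IZR.
        replace ((IZR x * IZR Q + IZR y * IZR Q') * alpha - (IZR x * IZR P + IZR y * IZR P'))
          with (IZR x * t + IZR y * t') by (unfold t, t'; ring).
        rewrite Ht'. ring. }
      rewrite EE, Rabs_mult, Ht', Rabs_mult, Rabs_Ropp, (Rabs_right c) by lra.
      rewrite plus_IZR. simpl.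
      assert (K : c + IZR a + 1 <= Rabs (IZR x - c * IZR y)).
      { apply (key x y a Q Q' c); try assumption; try lia;
        intros [Hy Hx]; apply Hex2; rewrite E1, Hy, Hx; ring. }
      pose proof (Rabs_pos t). nra.
    - set (x := (- (m * P' - p * Q'))%Z). set (y := (- (Q * p - P * m))%Z).
      assert (E1 : m = (x * Q + y * Q')%Z).
      { replace (x * Q + y * Q')%Z with (- m * (Q * P' - P * Q'))%Z by (unfold x, y; ring). rewrite D; ring. }
      assert (E2 : p = (x * P + y * P')%Z).
      { replace (x * P + y * P')%Z with (- p * (Q * P' - P * Q'))%Z by (unfold x, y; ring). rewrite D; ring. }
      assert (EE : IZR m * alpha - IZR p = (IZR x - c * IZR y) * t).
      { rewrite E1, E2, !plus_IZR, !mult_IZR.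
        replace ((IZR x * IZR Q + IZR y * IZR Q') * alpha - (IZR x * IZR P + IZR y * IZR P'))
          with (IZR x * t + IZR y * t') by (unfold t, t'; ring).
        rewrite Ht'. ring. }
      rewrite EE, Rabs_mult, Ht', Rabs_mult, Rabs_Ropp, (Rabs_right c) by lra.
      rewrite plus_IZR. simpl.
      assert (K : c + IZR a + 1 <= Rabs (IZR x - c * IZR y)).
      { apply (key x y a Q Q' c); try assumption; try lia;
        intros [Hy Hx]; apply Hex2; rewrite E1, Hy, Hx; ring. }
      pose proof (Rabs_pos t). nra. }
  pose proof (dist_le (IZR Q' * alpha) P') as D1. fold t' in D1.
  pose proof (dist_le (IZR Q * alpha) P) as D2. fold t in D2.
  assert (0 <= IZR (a + 1)) by (apply IZR_le; lia).
  apply Rle_ge. nra.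
Qed.
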